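(* Let Assumption 1 hold and suppose $n_k\ge N-1$ for some $k\in[L-1]$. Let $(W^*_l,b^*_l)_{l=1}^L$ be a critical point of $\Phi$ such that (1) there is a subset $\mathcal{I}\subseteq\{k+1,\dots,L\}$ with $k+1\in\mathcal{I}$ such that $(W^*_l,b^*_l)_{l=1}^L$ is non-degenerate on the variables $\{(W_l,b_l): l\in\mathcal{I}\}$, and (2) $\operatorname{rank}(W^*_l)=n_l$ for all $l\in[k+2,L]$. Then $(W^*_l,b^*_l)_{l=1}^L$ is a global minimum of $\Phi$.
   Context: Training data: $X=[x_1,\dots,x_N]^T\in\mathbb{R}^{N\times d}$, $Y=[y_1,\dots,y_N]^T\in\mathbb{R}^{N\times m}$ with entries $y_{ij}$. A fully connected network with layers $0,\dots,L$ has widths $n_0=d,n_1,\dots,n_{L-1},n_L=m$, weights $W_k\in\mathbb{R}^{n_{k-1}\times n_k}$ and biases $b_k\in\mathbb{R}^{n_k}$; $\mathcal{P}$ is the space of all parameters $(W_k,b_k)_{k=1}^L$ (identified with a Euclidean space). With $\sigma$ applied componentwise, $f_0(x)=x$, $g_k(x)=W_k^Tf_{k-1}(x)+b_k$, $f_k(x)=\sigma(g_k(x))$. The objective is $\Phi((W_k,b_k)_{k=1}^L)=\sum_{i=1}^N\sum_{j=1}^m l(f_{Lj}(x_i)-y_{ij})$, whose minimum over $\mathcal{P}$ is assumed attained. $[a]=\{1,\dots,a\}$, $[a,b]$ the integers from $a$ to $b$. Assumption 1: (1) $x_i\neq x_j$ for $i\ne j$; (2) $\sigma$ is real analytic on $\mathbb{R}$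 with $\sigma'(t)>0$ for all $t$, and either $\sigma$ is bounded or there are positive $\rho_1,\dots,\rho_4$ with $|\sigma(t)|\le\rho_1e^{\rho_2t}$ for $t<0$ and $|\sigma(t)|\le\rho_3t+\rho_4$ for $t\ge0$; (3) $l\in C^2(\mathbb{R})$ and whenever $l'(a)=0$, $a$ is a global minimizer of $l$. Definitions: a critical point is a point where $\nabla\Phi=0$. For a $C^2$ function $f$ and a subset $S$ of its variables, $\nabla^2_Sf$ denotes the Hessian with respect to the variables in $S$ only (the principal submatrix of the full Hessian). A critical point is non-degenerate on $S$ if $\nabla_S^2 f$ is non-singular there; it is non-degenerate if the full Hessian is non-singular. Here ''the variables $\{(W_l,b_l):l\in\mathcal{I}\}$'' means all entries of $W_l$ and $b_l$ for $l\in\mathcal{I}$. *)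

(* Defs.v *)
From Stdlib Require Import Reals Lra List.
Import ListNotations.
Open Scope R_scope.

Fixpoint rsum (n : nat) (f : nat -> R) : R :=
  match n with O => 0 | S p => rsum p f + f p end.

Definition real_analytic (s : R -> R) : Prop :=
  forall x0 : R, exists r : R, 0 < r /\ exists a : nat -> R,
    forall x, Rabs (x - x0) < r -> Pser a (x - x0) (s x).

Definition activation_ok (sigma : R -> R) : Prop :=
  real_analytic sigma /\
  (forall t, exists d, derivable_pt_lim sigma t d /\ 0 < d) /\
  ((exists M, forall t, Rabs (sigma t) <= M) \/
   (exists r1 r2 r3 r4, 0 < r1 /\ 0 < r2 /\ 0 < r3 /\ 0 < r4 /\
      (forall t, t < 0 -> Rabs (sigma t) <= r1 * exp (r2 * t)) /\
      (forall t, 0 <= t -> Rabs (sigma t) <= r3 * t + r4))).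

Definition loss_ok (l : R -> R) : Prop :=
  exists l1 l2 : R -> R,
    (forall a, derivable_pt_lim l a (l1 a)) /\
    (forall a, derivable_pt_lim l1 a (l2 a)) /\
    continuity l2 /\
    (forall a, l1 a = 0 -> forall b, l a <= l b).

(* coordinates of the parameter space: CW k i j = (W_k)_{ij}, Cb k j = (b_k)_j *)
Inductive coord : Type :=
  | CW (k i j : nat)
  | Cb (k j : nat).

Definition coord_eqb (c c' : coord) : bool :=
  match c, c' with
  | CW k i j, CW k' i' j' => Nat.eqb k k' && Nat.eqb i i' && Nat.eqb j j'
  | Cb k j, Cb k' j' => Nat.eqb k k' && Nat.eqb j j'
  | _, _ => false
  end.

Definition coord_layer (c : coord) : nat :=
  match c with CW k _ _ => k | Cb k _ => k end.

(* the genuine coordinates for widths n : n 0 = d, ..., n L = m.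
   W_k is n_{k-1} x n_k, b_k in R^{n_k}. *)
Definition valid (L : nat) (n : nat -> nat) (c : coord) : Prop :=
  match c with
  | CW k i j => (1 <= k <= L)%nat /\ (i < n (k - 1)%nat)%nat /\ (j < n k)%nat
  | Cb k j => (1 <= k <= L)%nat /\ (j < n k)%nat
  end.

Definition coords (L : nat) (n : nat -> nat) : list coord :=
  flat_map (fun k =>
     flat_map (fun i => map (fun j => CW k i j) (seq 0 (n k))) (seq 0 (n (k - 1)%nat))
     ++ map (fun j => Cb k j) (seq 0 (n k)))
  (seq 1 L).

(* a point of P: a value for each coordinate (values at non-valid
   coordinates are irrelevant: Phi does not read them) *)
Definition params := coord -> R.

Definition perturb (th : params) (c : coord) (t : R) : params :=
  fun c' => if coord_eqb c c' then th c' + t else th c'.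

Fixpoint fwd (sigma : R -> R) (n : nat -> nat) (th : params) (k : nat)
  (x : nat -> R) : nat -> R :=
  match k with
  | O => x
  | S p => fun j =>
      sigma (rsum (n p) (fun i => th (CW (S p) i j) * fwd sigma n th p x i)
             + th (Cb (S p) j))
  end.

(* Phi(theta) = sum_{i<N} sum_{j<m} l( f_{Lj}(x_i) - y_{ij} ),
   X i = x_{i+1} (coordinates p < d), Y i j = y_{i+1, j+1} *)
Definition Phi (sigma l : R -> R) (L : nat) (n : nat -> nat) (N : nat)
  (X : nat -> nat -> R) (Y : nat -> nat -> R) (th : params) : R :=
  rsum N (fun i => rsum (n L) (fun j => l (fwd sigma n th L (X i) j - Y i j))).

Definition has_partial (F : params -> R) (c : coord) (G : params -> R) : Prop :=
  forall th, derivable_pt_lim (fun t => F (perturb th c t)) 0 (G th).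

Definition critical_point (F : params -> R) (L : nat) (n : nat -> nat)
  (th : params) : Prop :=
  forall c, valid L n c -> derivable_pt_lim (fun t => F (perturb th c t)) 0 0.

Definition is_hessian (F : params -> R) (L : nat) (n : nat -> nat)
  (th : params) (H : coord -> coord -> R) : Prop :=
  exists G : coord -> params -> R,
    (forall c, valid L n c -> has_partial F c (G c)) /\
    (forall c c', valid L n c -> valid L n c' ->
       derivable_pt_lim (fun t => G c (perturb th c' t)) 0 (H c c')).

Definition nonsingular_on (L : nat) (n : nat -> nat) (S : coord -> bool)
  (H : coord -> coord -> R) : Prop :=
  forall v : coord -> R,
    (forall c, In c (filter S (coords L n)) ->
       fold_right Rplus 0
         (map (fun c' => H c c' * v c') (filter S (coords L n))) = 0) ->
    forall c, In c (filter S (coords L n)) -> v c = 0.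

Definition nondegenerate_on_layers (F : params -> R) (L : nat) (n : nat -> nat)
  (I : nat -> bool) (th : params) : Prop :=
  exists H, is_hessian F L n th H /\
    nonsingular_on L n (fun c => I (coord_layer c)) H.

Definition full_column_rank (n : nat -> nat) (th : params) (l : nat) : Prop :=
  forall v : nat -> R,
    (forall i, (i < n (l - 1)%nat)%nat -> rsum (n l) (fun j => th (CW l i j) * v j) = 0) ->
    forall j, (j < n l)%nat -> v j = 0.

Definition global_min (F : params -> R) (th : params) : Prop :=
  forall th', F th <= F th'.

(* Main.v *)
Require Import Defs.
From Stdlib Require Import Reals List.
From Stdlib Require Import Lra Lia FunctionalExtensionality ClassicalEpsilon.
Open Scope R_scope.


Lemma dl_ext f g x v : (forall t, f t = g t) -> derivable_pt_lim f x v -> derivable_pt_lim g x v.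
Proof. intros H; replace g with f by (apply functional_extensionality; auto); auto. Qed.
Lemma dl_eqv f x v w : derivable_pt_lim f x v -> v = w -> derivable_pt_lim f x w.
Proof. intros H <-; auto. Qed.
Lemma dl_plus f g x a b : derivable_pt_lim f x a -> derivable_pt_lim g x b ->
  derivable_pt_lim (fun t => f t + g t) x (a + b).
Proof. intros; exact (derivable_pt_lim_plus f g x a b H H0). Qed.
Lemma dl_mult f g x a b : derivable_pt_lim f x a -> derivable_pt_lim g x b ->
  derivable_pt_lim (fun t => f t * g t) x (a * g x + f x * b).
Proof. intros; exact (derivable_pt_lim_mult f g x a b H H0). Qed.
Lemma dl_comp f g x a b : derivable_pt_lim f x a -> derivable_pt_lim g (f x) b ->
  derivable_pt_lim (fun t => g (f t)) x (b * a).
Proof. intros; exact (derivable_pt_lim_comp f g x a b H H0). Qed.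
Lemma dl_const c x : derivable_pt_lim (fun _ => c) x 0.
Proof. exact (derivable_pt_lim_const c x). Qed.
Lemma dl_id x : derivable_pt_lim (fun t => t) x 1.
Proof. exact (derivable_pt_lim_id x). Qed.
Lemma dl_cmul c f x a : derivable_pt_lim f x a -> derivable_pt_lim (fun t => c * f t) x (c * a).
Proof. intros H. eapply dl_eqv. apply (dl_mult (fun _ => c) f). apply dl_const. exact H. simpl; ring. Qed.
Lemma dl_affine c k x : derivable_pt_lim (fun t => c + t * k) x k.
Proof. eapply dl_eqv. apply (dl_plus (fun _ => c) (fun t => t * k)). apply dl_const.
  apply (dl_mult (fun t => t) (fun _ => k)). apply dl_id. apply dl_const. ring. Qed.

Definition dex (f : R -> R) (x : R) := exists v, derivable_pt_lim f x v.
Lemma dex_plus f g x : dex f x -> dex g x -> dex (fun t => f t + g t) x.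
Proof. intros [a Ha] [b Hb]; eexists; apply dl_plus; eauto. Qed.
Lemma dex_mult f g x : dex f x -> dex g x -> dex (fun t => f t * g t) x.
Proof. intros [a Ha] [b Hb]; eexists; apply dl_mult; eauto. Qed.
Lemma dex_comp f g x : dex f x -> dex g (f x) -> dex (fun t => g (f t)) x.
Proof. intros [a Ha] [b Hb]; eexists; apply dl_comp; eauto. Qed.
Lemma dex_const c x : dex (fun _ => c) x.
Proof. eexists; apply dl_const. Qed.
Lemma dex_id x : dex (fun t => t) x.
Proof. eexists; apply dl_id. Qed.
Lemma dex_ext f g x : (forall t, f t = g t) -> dex f x -> dex g x.
Proof. intros H [a Ha]; exists a; eapply dl_ext; eauto. Qed.

Lemma rsum_ext n f g : (forall i, (i < n)%nat -> f i = g i) -> rsum n f = rsum n g.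
Proof. induction n; simpl; intros; auto. rewrite IHn, H; auto. Qed.
Lemma rsum_plus n f g : rsum n (fun i => f i + g i) = rsum n f + rsum n g.
Proof. induction n; simpl; [ring|rewrite IHn; ring]. Qed.
Lemma rsum_mult_l n c f : rsum n (fun i => c * f i) = c * rsum n f.
Proof. induction n; simpl; [ring|rewrite IHn; ring]. Qed.
Lemma rsum_mult_r n c f : rsum n (fun i => f i * c) = rsum n f * c.
Proof. induction n; simpl; [ring|rewrite IHn; ring]. Qed.
Lemma rsum_zero n f : (forall i, (i < n)%nat -> f i = 0) -> rsum n f = 0.
Proof. induction n; simpl; intros; auto. rewrite IHn, H; auto; ring. Qed.
Lemma rsum_swap n m (f : nat -> nat -> R) :
  rsum n (fun i => rsum m (fun j => f i j)) = rsum m (fun j => rsum n (fun i => f i j)).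
Proof. induction n; simpl.
  - symmetry; apply rsum_zero; intros; reflexivity.
  - rewrite IHn, <- rsum_plus. reflexivity. Qed.
Lemma rsum_point n a (g : nat -> R) :
  rsum n (fun a' => if Nat.eqb a a' then g a' else 0) = if Nat.ltb a n then g a else 0.
Proof.
  induction n; simpl. destruct a; auto.
  rewrite IHn. destruct (Nat.eqb_spec a n); destruct (Nat.ltb_spec a n); destruct (Nat.ltb_spec a (S n)); subst; try lia; ring.
Qed.
Lemma rsum_le n f g : (forall i, (i < n)%nat -> f i <= g i) -> rsum n f <= rsum n g.
Proof. induction n; simpl; intros. lra. apply Rplus_le_compat; auto. Qed.
Lemma dl_rsum n (F : nat -> R -> R) F' x :
  (forall i, (i < n)%nat -> derivable_pt_lim (F i) x (F' i)) ->
  derivable_pt_lim (fun t => rsum n (fun i => F i t)) x (rsum n F').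
Proof.
  induction n; simpl; intros. apply dl_const. apply dl_plus; [apply IHn; auto | apply H; lia].
Qed.
Lemma dex_rsum n (F : nat -> R -> R) x :
  (forall i, (i < n)%nat -> dex (F i) x) -> dex (fun t => rsum n (fun i => F i t)) x.
Proof.
  induction n; simpl; intros. apply dex_const. apply dex_plus; [apply IHn; auto | apply H; lia].
Qed.


Definition listsum {T} (l : list T) (f : T -> R) : R := fold_right Rplus 0 (map f l).

Lemma ls_ext {T} (l : list T) f g : (forall x, In x l -> f x = g x) -> listsum l f = listsum l g.
Proof. unfold listsum; induction l; simpl; intros; auto. rewrite H, IHl; auto. Qed.
Lemma ls_app {T} (l1 l2 : list T) f : listsum (l1 ++ l2) f = listsum l1 f + listsum l2 f.
Proof. unfold listsum; induction l1; simpl; intros. ring. rewrite IHl1; ring. Qed.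
Lemma ls_flat_map {T U} (g : T -> list U) l f :
  listsum (flat_map g l) f = listsum l (fun x => listsum (g x) f).
Proof. induction l; simpl. reflexivity. rewrite ls_app, IHl. reflexivity. Qed.
Lemma ls_map {T U} (g : T -> U) l f : listsum (map g l) f = listsum l (fun x => f (g x)).
Proof. unfold listsum; rewrite map_map; reflexivity. Qed.
Lemma ls_zero {T} (l : list T) f : (forall x, In x l -> f x = 0) -> listsum l f = 0.
Proof. unfold listsum; induction l; simpl; intros; auto. rewrite H, IHl; auto; ring. Qed.
Lemma ls_mult_l {T} (l : list T) a f : listsum l (fun x => a * f x) = a * listsum l f.
Proof. unfold listsum; induction l; simpl. ring. rewrite IHl; ring. Qed.
Lemma ls_rsum {T} (l : list T) N (F : nat -> T -> R) :
  listsum l (fun x => rsum N (fun i => F i x)) = rsum N (fun i => listsum l (F i)).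
Proof.
  unfold listsum; induction l; simpl. symmetry; apply rsum_zero; auto.
  rewrite IHl, <- rsum_plus. reflexivity.
Qed.
Lemma ls_filter {T} (P : T -> bool) l f : (forall x, In x l -> P x = false -> f x = 0) ->
  listsum (filter P l) f = listsum l f.
Proof.
  unfold listsum; induction l; simpl; intros; auto.
  destruct (P a) eqn:E; simpl; rewrite IHl; auto. rewrite H; auto; ring.
Qed.
Lemma ls_seq0 n f : listsum (seq 0 n) f = rsum n f.
Proof. induction n. reflexivity. rewrite seq_S, ls_app, IHn. unfold listsum; simpl; ring. Qed.
Lemma ls_seq_point a len g x : (a <= x < a + len)%nat -> (forall y, y <> x -> g y = 0) ->
  listsum (seq a len) g = g x.
Proof.
  revert a; induction len; intros a Hx Hg. lia.
  change (g a + listsum (seq (S a) len) g = g x).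
  destruct (Nat.eq_dec a x).
  - subst. rewrite ls_zero. ring. intros y Hy. apply in_seq in Hy. apply Hg. lia.
  - rewrite IHlen; auto. rewrite Hg; auto; ring. lia.
Qed.

Lemma in_coords L n c : In c (coords L n) <-> valid L n c.
Proof.
  unfold coords, valid. rewrite in_flat_map. split.
  - intros [k [Hk Hc]]. apply in_seq in Hk. apply in_app_iff in Hc. destruct Hc as [Hc|Hc].
    + apply in_flat_map in Hc. destruct Hc as [i [Hi Hc]]. apply in_map_iff in Hc.
      destruct Hc as [j [<- Hj]]. apply in_seq in Hi, Hj. lia.
    + apply in_map_iff in Hc. destruct Hc as [j [<- Hj]]. apply in_seq in Hj. lia.
  - destruct c as [k i j | k j]; intros H.
    + exists k. split. apply in_seq; lia. apply in_app_iff; left. apply in_flat_map. exists i.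
      split. apply in_seq; lia. apply in_map_iff. exists j. split; auto. apply in_seq; lia.
    + exists k. split. apply in_seq; lia. apply in_app_iff; right. apply in_map_iff. exists j.
      split; auto. apply in_seq; lia.
Qed.

Definition blk (n : nat -> nat) (K : nat) : list coord :=
  flat_map (fun i => map (fun j => CW K i j) (seq 0 (n K))) (seq 0 (n (K - 1)%nat))
  ++ map (fun j => Cb K j) (seq 0 (n K)).

Lemma blk_layer n K c : In c (blk n K) -> coord_layer c = K.
Proof.
  unfold blk; intros H. apply in_app_iff in H; destruct H as [H|H].
  - apply in_flat_map in H; destruct H as [i [_ H]]. apply in_map_iff in H. destruct H as [j [<- _]]; reflexivity.
  - apply in_map_iff in H. destruct H as [j [<- _]]; reflexivity.
Qed.

Lemma ls_coords_layer L n K (f : coord -> R) : (1 <= K <= L)%nat ->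
  (forall c, coord_layer c <> K -> f c = 0) -> listsum (coords L n) f = listsum (blk n K) f.
Proof.
  intros HK Hf. unfold coords. rewrite ls_flat_map.
  apply (ls_seq_point 1 L (fun x => listsum (blk n x) f) K). lia.
  intros y Hy. apply ls_zero. intros c Hc. apply Hf. rewrite (blk_layer n y c Hc). auto.
Qed.


Lemma coord_eqb_true c z : coord_eqb c z = true -> c = z.
Proof.
  destruct c, z; simpl; try discriminate; intros H;
  repeat match goal with H : (_ && _)%bool = true |- _ => apply andb_prop in H; destruct H end;
  repeat match goal with H : Nat.eqb _ _ = true |- _ => apply Nat.eqb_eq in H end; subst; auto.
Qed.
Lemma perturb_val th c t z : perturb th c t z = th z + (if coord_eqb c z then t else 0).
Proof. unfold perturb; destruct (coord_eqb c z); ring. Qed.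
Lemma perturb_other th c t z : coord_layer z <> coord_layer c -> perturb th c t z = th z.
Proof. intros H; unfold perturb; destruct (coord_eqb c z) eqn:E; auto.
  apply coord_eqb_true in E; subst; tauto. Qed.

Lemma coord_eqb_false_layer c z : coord_layer c <> coord_layer z -> coord_eqb c z = false.
Proof. intros H; destruct (coord_eqb c z) eqn:E; auto. apply coord_eqb_true in E; subst; tauto. Qed.

Definition dv (f : R -> R) (x : R) : R :=
  ClassicalEpsilon.epsilon (inhabits 0) (fun v => derivable_pt_lim f x v).
Lemma dv_spec f x : dex f x -> derivable_pt_lim f x (dv f x).
Proof. intros H. unfold dv. apply ClassicalEpsilon.epsilon_spec. exact H. Qed.

Section Net.
Variables (sigma l s1 l1 : R -> R) (n : nat -> nat) (L : nat).

Definition next (th : params) (q : nat) (g : nat -> R) : nat -> R :=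
  fun m => rsum (n q) (fun r => th (CW (S q) r m) * sigma (g r)) + th (Cb (S q) m).
Fixpoint chi (th : params) (y : nat -> R) (d q : nat) (g : nat -> R) : R :=
  match d with
  | O => rsum (n q) (fun m => l (sigma (g m) - y m))
  | S d' => chi th y d' (S q) (next th q g)
  end.
Fixpoint Dl (th : params) (y : nat -> R) (d q : nat) (g : nat -> R) (r : nat) : R :=
  match d with
  | O => l1 (sigma (g r) - y r) * s1 (g r)
  | S d' => s1 (g r) * rsum (n (S q)) (fun m => th (CW (S q) r m) * Dl th y d' (S q) (next th q g) m)
  end.
Definition preS (th : params) (q : nat) (x : nat -> R) (j : nat) : R :=
  rsum (n q) (fun a => th (CW (S q) a j) * fwd sigma n th q x a) + th (Cb (S q) j).
Definition Fi (th : params) (x y : nat -> R) : R :=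
  rsum (n L) (fun j => l (fwd sigma n th L x j - y j)).

Lemma fwd_S th q x j : fwd sigma n th (S q) x j = sigma (preS th q x j).
Proof. reflexivity. Qed.

Lemma Fi_chi d : forall q0 th x y, (S q0 + d = L)%nat ->
  chi th y d (S q0) (preS th q0 x) = Fi th x y.
Proof.
  induction d; intros q0 th x y H; simpl.
  - unfold Fi. replace L with (S q0) by lia. apply rsum_ext; intros; reflexivity.
  - rewrite <- (IHd (S q0) th x y) by lia. f_equal.
Qed.

Lemma fwd_agree q : forall th1 th2 x, (forall c, (coord_layer c <= q)%nat -> th1 c = th2 c) ->
  forall j, fwd sigma n th1 q x j = fwd sigma n th2 q x j.
Proof.
  induction q; intros; simpl; auto. apply f_equal. apply f_equal2.
  - apply rsum_ext; intros. rewrite H by (simpl; lia). rewrite (IHq th1 th2); [reflexivity|]. intros; apply H; lia.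
  - apply H; simpl; lia.
Qed.

Lemma next_agree th1 th2 q g : (forall c, (q < coord_layer c)%nat -> th1 c = th2 c) ->
  next th1 q g = next th2 q g.
Proof. intros H; apply functional_extensionality; intros m; unfold next.
  rewrite H by (simpl; lia). f_equal. apply rsum_ext; intros. rewrite H by (simpl; lia); auto. Qed.

Lemma chi_agree d : forall th1 th2 y q g, (forall c, (q < coord_layer c)%nat -> th1 c = th2 c) ->
  chi th1 y d q g = chi th2 y d q g.
Proof.
  induction d; intros; simpl; auto. rewrite (next_agree th1 th2) by auto. apply IHd.
  intros; apply H; lia.
Qed.

Lemma Dl_agree d : forall th1 th2 y q g r, (forall c, (q < coord_layer c)%nat -> th1 c = th2 c) ->
  Dl th1 y d q g r = Dl th2 y d q g r.
Proof.
  induction d; intros; simpl; auto. rewrite (next_agree th1 th2) by auto. f_equal.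
  apply rsum_ext; intros. rewrite H by (simpl; lia). f_equal. apply IHd. intros; apply H; lia.
Qed.

Definition pcoef (th : params) (q0 : nat) (x : nat -> R) (z : coord) (m : nat) : R :=
  match z with
  | CW q a j => if (Nat.eqb q (S q0) && Nat.eqb j m)%bool then
                 (if Nat.ltb a (n q0) then fwd sigma n th q0 x a else 0) else 0
  | Cb q j => if (Nat.eqb q (S q0) && Nat.eqb j m)%bool then 1 else 0
  end.

Lemma preS_perturb th q0 x z t : (S q0 <= coord_layer z)%nat -> forall m,
  preS (perturb th z t) q0 x m = preS th q0 x m + t * pcoef th q0 x z m.
Proof.
  intros Hz m. unfold preS.
  assert (Hf : forall a, fwd sigma n (perturb th z t) q0 x a = fwd sigma n th q0 x a).
  { intros; apply fwd_agree; intros; apply perturb_other; lia. }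
  rewrite (rsum_ext _ _ (fun a => th (CW (S q0) a m) * fwd sigma n th q0 x a
       + (if coord_eqb z (CW (S q0) a m) then t * fwd sigma n th q0 x a else 0)))
    by (intros; rewrite Hf, perturb_val; destruct (coord_eqb z _); ring).
  rewrite rsum_plus, perturb_val.
  enough (Hs : rsum (n q0) (fun a => if coord_eqb z (CW (S q0) a m) then t * fwd sigma n th q0 x a else 0)
     + (if coord_eqb z (Cb (S q0) m) then t else 0) = t * pcoef th q0 x z m) by lra.
  destruct z as [q a j | q j]; simpl.
  - destruct (Nat.eqb q (S q0)) eqn:E1; simpl.
    + destruct (Nat.eqb j m) eqn:E2; simpl.
      * rewrite (rsum_ext _ _ (fun a' => if Nat.eqb a a' then t * fwd sigma n th q0 x a' else 0)).
        2:{ intros. rewrite Bool.andb_true_r. reflexivity. }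
        rewrite rsum_point. destruct (Nat.ltb a (n q0)); ring.
      * rewrite rsum_zero. ring. intros. rewrite Bool.andb_false_r. reflexivity.
    + rewrite rsum_zero. ring. intros. reflexivity.
  - rewrite rsum_zero by reflexivity.
    destruct (Nat.eqb q (S q0) && Nat.eqb j m)%bool; ring.
Qed.

Lemma pcoef_agree th1 th2 q0 x z m : (forall c, (coord_layer c <= q0)%nat -> th1 c = th2 c) ->
  pcoef th1 q0 x z m = pcoef th2 q0 x z m.
Proof. intros H; destruct z; simpl; auto. rewrite (fwd_agree q0 th1 th2); auto. Qed.


Hypothesis Hs1 : forall t, derivable_pt_lim sigma t (s1 t).
Hypothesis Hl1 : forall t, derivable_pt_lim l t (l1 t).

Lemma next_deriv th q h h' : (forall r, (r < n q)%nat -> derivable_pt_lim (fun t => h t r) 0 (h' r)) ->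
  forall m, derivable_pt_lim (fun t => next th q (h t) m) 0
    (rsum (n q) (fun r => th (CW (S q) r m) * (s1 (h 0 r) * h' r))).
Proof.
  intros Hh m. unfold next. eapply dl_eqv.
  apply (dl_plus (fun t => rsum (n q) (fun r => th (CW (S q) r m) * sigma (h t r))) (fun _ => th (Cb (S q) m))).
  2: apply dl_const.
  apply (dl_rsum (n q) (fun r t => th (CW (S q) r m) * sigma (h t r))
     (fun r => th (CW (S q) r m) * (s1 (h 0 r) * h' r))).
  intros i Hi. apply dl_cmul. eapply dl_eqv. apply (dl_comp (fun t => h t i) sigma). apply Hh; auto.
  apply Hs1. ring. ring.
Qed.

Lemma chi_deriv d : forall th y q h h',
  (forall r, (r < n q)%nat -> derivable_pt_lim (fun t => h t r) 0 (h' r)) ->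
  derivable_pt_lim (fun t => chi th y d q (h t)) 0 (rsum (n q) (fun r => h' r * Dl th y d q (h 0) r)).
Proof.
  induction d; intros th y q h h' Hh; simpl.
  - apply (dl_rsum (n q) (fun m t => l (sigma (h t m) - y m))
      (fun r => h' r * (l1 (sigma (h 0 r) - y r) * s1 (h 0 r)))).
    intros i Hi. eapply dl_eqv.
    apply (dl_comp (fun t => sigma (h t i) - y i) l).
    + eapply dl_eqv. apply (dl_plus (fun t => sigma (h t i)) (fun _ => - y i)).
      apply (dl_comp (fun t => h t i) sigma). apply Hh; auto. apply Hs1. apply dl_const.
      reflexivity.
    + apply Hl1.
    + ring.
  - eapply dl_eqv. apply (IHd th y (S q) (fun t => next th q (h t))).
    intros r Hr. apply next_deriv. exact Hh.
    simpl.
    rewrite (rsum_ext _ _ (fun m => rsum (n q) (fun r => th (CW (S q) r m) * (s1 (h 0 r) * h' r) *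
        Dl th y d (S q) (next th q (h 0)) m)))
      by (intros; rewrite <- rsum_mult_r; reflexivity).
    rewrite rsum_swap. apply rsum_ext. intros r Hr.
    rewrite <- !rsum_mult_l. apply rsum_ext. intros. ring.
Qed.

Definition Ec (th : params) (x y : nat -> R) (c : coord) : R :=
  rsum (n (coord_layer c)) (fun r => pcoef th (pred (coord_layer c)) x c r *
      Dl th y (L - coord_layer c) (coord_layer c) (preS th (pred (coord_layer c)) x) r).

Lemma dFi th x y c : (1 <= coord_layer c <= L)%nat ->
  derivable_pt_lim (fun t => Fi (perturb th c t) x y) 0 (Ec th x y c).
Proof.
  intros Hc. unfold Ec. destruct (coord_layer c) as [|q0] eqn:Ec0; [lia|]. simpl pred.
  apply (dl_ext (fun t => chi th y (L - S q0) (S q0) (preS (perturb th c t) q0 x))).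
  { intros t. rewrite <- (Fi_chi (L - S q0) q0 (perturb th c t) x y) by lia.
    symmetry. apply (chi_agree (L - S q0) (perturb th c t) th y (S q0)).
    intros; apply perturb_other; lia. }
  eapply dl_eqv. apply chi_deriv.
  intros r Hr. apply (dl_ext (fun t => preS th q0 x r + t * pcoef th q0 x c r)).
  intros t; rewrite preS_perturb by lia; ring. apply dl_affine.
  apply rsum_ext. intros r Hr. f_equal. f_equal. apply functional_extensionality. intros m.
  rewrite preS_perturb by lia. ring.
Qed.

Lemma Ec_CW th x y k p j : (p < n k)%nat -> (j < n (S k))%nat ->
  Ec th x y (CW (S k) p j) = fwd sigma n th k x p * Dl th y (L - S k) (S k) (preS th k x) j.
Proof.
  intros Hp Hj. unfold Ec; simpl coord_layer; simpl pred. unfold pcoef. rewrite Nat.eqb_refl. simpl andb.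
  rewrite (rsum_ext _ _ (fun r => if Nat.eqb j r then
     (if Nat.ltb p (n k) then fwd sigma n th k x p else 0) * Dl th y (L - S k) (S k) (preS th k x) r else 0))
    by (intros; destruct (Nat.eqb j i); ring).
  rewrite rsum_point. apply Nat.ltb_lt in Hp, Hj. rewrite Hp, Hj. reflexivity.
Qed.

Lemma Ec_Cb th x y k j : (j < n (S k))%nat ->
  Ec th x y (Cb (S k) j) = Dl th y (L - S k) (S k) (preS th k x) j.
Proof.
  intros Hj. unfold Ec; simpl coord_layer; simpl pred. unfold pcoef. rewrite Nat.eqb_refl. simpl andb.
  rewrite (rsum_ext _ _ (fun r => if Nat.eqb j r then Dl th y (L - S k) (S k) (preS th k x) r else 0))
    by (intros; destruct (Nat.eqb j i); ring).
  rewrite rsum_point. apply Nat.ltb_lt in Hj. rewrite Hj. reflexivity.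
Qed.

Lemma back (th : params) (Hpos : forall t, 0 < s1 t) d : forall q0 x y, (S q0 + d = L)%nat ->
  (forall q, (S (S q0) <= q <= L)%nat -> full_column_rank n th q) ->
  (forall r, (r < n (S q0))%nat -> Dl th y d (S q0) (preS th q0 x) r = 0) ->
  forall m, (m < n L)%nat -> l1 (fwd sigma n th L x m - y m) = 0.
Proof.
  induction d; intros q0 x y HL Hr HD m Hm.
  - rewrite Nat.add_0_r in HL. subst L. specialize (HD m Hm). simpl in HD.
    rewrite fwd_S. specialize (Hpos (preS th q0 x m)).
    destruct (Rmult_integral _ _ HD); auto. lra.
  - apply (IHd (S q0) x y); auto. lia. intros; apply Hr; lia.
    assert (Hz : forall r, (r < n (S q0))%nat -> rsum (n (S (S q0)))
        (fun m0 => th (CW (S (S q0)) r m0) * Dl th y d (S (S q0)) (preS th (S q0) x) m0) = 0).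
    { intros r Hr0. specialize (HD r Hr0). simpl in HD.
      destruct (Rmult_integral _ _ HD) as [H0|H0]. specialize (Hpos (preS th q0 x r)). lra.
      rewrite <- H0. apply rsum_ext; intros. reflexivity. }
    apply (Hr (S (S q0))). lia. exact Hz.
Qed.

Hypothesis Hs2 : forall t, dex s1 t.
Hypothesis Hl2 : forall t, dex l1 t.

Lemma sig_dex f x : dex f x -> dex (fun s => sigma (f s)) x.
Proof. intros H; apply dex_comp; auto. eexists; apply Hs1. Qed.

Lemma pert_dex th z c : dex (fun s => perturb th z s c) 0.
Proof.
  apply (dex_ext (fun s => th c + (if coord_eqb z c then s else 0))).
  intros; rewrite perturb_val; auto.
  destruct (coord_eqb z c). apply dex_plus. apply dex_const. apply dex_id. apply dex_const.
Qed.

Lemma fwd_dex th z q : forall x r, dex (fun s => fwd sigma n (perturb th z s) q x r) 0.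
Proof.
  induction q; intros; simpl. apply dex_const.
  apply sig_dex. apply dex_plus. 2: apply pert_dex.
  apply (dex_rsum (n q) (fun a s => perturb th z s (CW (S q) a r) * fwd sigma n (perturb th z s) q x a)).
  intros; apply dex_mult. apply pert_dex. apply IHq.
Qed.

Lemma preS_dex th z q x r : dex (fun s => preS (perturb th z s) q x r) 0.
Proof.
  unfold preS. apply dex_plus. 2: apply pert_dex.
  apply (dex_rsum (n q) (fun a s => perturb th z s (CW (S q) a r) * fwd sigma n (perturb th z s) q x a)).
  intros; apply dex_mult. apply pert_dex. apply fwd_dex.
Qed.

Lemma Dl_dex d : forall th y q h b, (forall r, dex (fun s => h s r) 0) ->
  dex (fun s => Dl th y d q (h s) b) 0.
Proof.
  induction d; intros th y q h b Hh; simpl.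
  - apply dex_mult.
    + apply (dex_comp (fun s => sigma (h s b) - y b) l1). apply dex_plus. apply sig_dex; auto.
      apply dex_const. apply Hl2.
    + apply dex_comp; auto.
  - apply dex_mult. apply dex_comp; auto.
    apply (dex_rsum (n (S q)) (fun m s => th (CW (S q) b m) * Dl th y d (S q) (next th q (h s)) m)).
    intros; apply dex_mult. apply dex_const. apply (IHd th y (S q) (fun s => next th q (h s))).
    intros r. unfold next. apply dex_plus. 2: apply dex_const.
    apply (dex_rsum (n q) (fun r' s => th (CW (S q) r' r) * sigma (h s r'))).
    intros; apply dex_mult. apply dex_const. apply sig_dex; auto.
Qed.

Lemma Ec_dex th z x y c : (coord_layer z <= coord_layer c)%nat ->
  dex (fun s => Ec (perturb th z s) x y c) 0.
Proof.
  intros Hz. unfold Ec.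
  apply (dex_rsum (n (coord_layer c)) (fun r s => pcoef (perturb th z s) (pred (coord_layer c)) x c r *
      Dl (perturb th z s) y (L - coord_layer c) (coord_layer c) (preS (perturb th z s) (pred (coord_layer c)) x) r)).
  intros r Hr. apply dex_mult.
  - destruct c; simpl. destruct (_ && _)%bool. destruct (_ <? _). apply fwd_dex.
    apply dex_const. apply dex_const. apply dex_const.
  - apply (dex_ext (fun s => Dl th y (L - coord_layer c) (coord_layer c) (preS (perturb th z s) (pred (coord_layer c)) x) r)).
    intros; apply Dl_agree. intros; symmetry; apply perturb_other; lia.
    apply Dl_dex. intros; apply preS_dex.
Qed.

Lemma Fi_shift th k c c' x y al u t : coord_layer c' = S k -> (S k <= coord_layer c <= L)%nat ->
  (forall m, pcoef th k x c' m = al * pcoef th k x (Cb (S k) 0) m) ->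
  Fi (perturb (perturb th c' u) c t) x y = Fi (perturb (perturb th (Cb (S k) 0) (u * al)) c t) x y.
Proof.
  intros Hc' Hc Hal.
  rewrite <- (Fi_chi (L - S k) k (perturb (perturb th c' u) c t) x y) by lia.
  rewrite <- (Fi_chi (L - S k) k (perturb (perturb th (Cb (S k) 0) (u * al)) c t) x y) by lia.
  rewrite (chi_agree (L - S k) (perturb (perturb th c' u) c t) (perturb (perturb th (Cb (S k) 0) (u * al)) c t) y (S k)).
  2:{ intros c0 H0. rewrite !perturb_val.
      rewrite (coord_eqb_false_layer c' c0) by lia.
      rewrite (coord_eqb_false_layer (Cb (S k) 0) c0) by (simpl; lia). ring. }
  f_equal. apply functional_extensionality. intros m.
  rewrite !preS_perturb by (simpl; lia).
  rewrite (pcoef_agree (perturb th c' u) th) by (intros; apply perturb_other; lia).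
  rewrite (pcoef_agree (perturb th (Cb (S k) 0) (u * al)) th) by (intros; apply perturb_other; simpl; lia).
  rewrite Hal. ring.
Qed.

Lemma hess_formula N X Y th H k c c' (al : nat -> R) :
  is_hessian (Phi sigma l L n N X Y) L n th H ->
  valid L n c -> valid L n c' -> (S k <= coord_layer c)%nat -> coord_layer c' = S k ->
  (forall i m, pcoef th k (X i) c' m = al i * pcoef th k (X i) (Cb (S k) 0) m) ->
  H c c' = rsum N (fun i => al i * dv (fun s => Ec (perturb th (Cb (S k) 0) s) (X i) (Y i) c) 0).
Proof.
  intros [G [HG HH]] Hvc Hvc' Hk Hc' Hal.
  assert (Hlc : (1 <= coord_layer c <= L)%nat) by (destruct c; simpl in *; lia).
  assert (HA : forall u, G c (perturb th c' u) =
     rsum N (fun i => Ec (perturb th (Cb (S k) 0) (u * al i)) (X i) (Y i) c)).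
  { intros u. specialize (HG c Hvc (perturb th c' u)).
    apply (uniqueness_limite _ 0 _ _ HG).
    apply (dl_ext (fun t => rsum N (fun i => Fi (perturb (perturb th (Cb (S k) 0) (u * al i)) c t) (X i) (Y i)))).
    { intros t. unfold Phi. apply rsum_ext. intros i Hi.
      rewrite <- (Fi_shift th k c c' (X i) (Y i) (al i) u t); auto. lia. }
    apply (dl_rsum N (fun i t => Fi (perturb (perturb th (Cb (S k) 0) (u * al i)) c t) (X i) (Y i))).
    intros i Hi. apply dFi; auto. }
  apply (uniqueness_limite _ 0 _ _ (HH c c' Hvc Hvc')).
  apply (dl_ext (fun u => rsum N (fun i => Ec (perturb th (Cb (S k) 0) (u * al i)) (X i) (Y i) c))).
  { intros u; rewrite HA; reflexivity. }
  apply (dl_rsum N (fun i u => Ec (perturb th (Cb (S k) 0) (u * al i)) (X i) (Y i) c)).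
  intros i Hi. eapply dl_eqv.
  apply (dl_comp (fun u => u * al i) (fun s => Ec (perturb th (Cb (S k) 0) s) (X i) (Y i) c)).
  apply (dl_ext (fun t => 0 + t * al i)). intros; ring. apply dl_affine.
  rewrite Rmult_0_l. apply dv_spec. apply Ec_dex. simpl; lia.
  ring.
Qed.

Definition Mc th k (x : nat -> R) p := if Nat.ltb p (n k) then fwd sigma n th k x p else 1.

Lemma kernel_triv N X Y th k I :
  nondegenerate_on_layers (Phi sigma l L n N X Y) L n I th ->
  (S k <= L)%nat -> I (S k) = true -> (forall q, I q = true -> (S k <= q <= L)%nat) ->
  (1 <= n (S k))%nat ->
  forall u, (forall i, (i < N)%nat -> rsum (S (n k)) (fun p => Mc th k (X i) p * u p) = 0) ->
  forall p, (p < S (n k))%nat -> u p = 0.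
Proof.
  intros [H [Hh Hns]] HkL HIk HI Hn1 u Hu.
  set (v := fun c' => match c' with
     | CW q p j => if (Nat.eqb q (S k) && Nat.eqb j 0 && Nat.ltb p (n k))%bool then u p else 0
     | Cb q j => if (Nat.eqb q (S k) && Nat.eqb j 0)%bool then u (n k) else 0 end).
  assert (Hv : forall c, In c (filter (fun c => I (coord_layer c)) (coords L n)) -> v c = 0).
  { apply Hns. intros c Hc. apply filter_In in Hc. destruct Hc as [Hc HIc].
    apply in_coords in Hc. specialize (HI _ HIc).
    set (kap := fun i => dv (fun s => Ec (perturb th (Cb (S k) 0) s) (X i) (Y i) c) 0).
    set (beta := fun i c' => match c' with
     | CW q p j => if (Nat.eqb q (S k) && Nat.eqb j 0 && Nat.ltb p (n k))%bool then Mc th k (X i) p * u p else 0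
     | Cb q j => if (Nat.eqb q (S k) && Nat.eqb j 0)%bool then u (n k) else 0 end).
    change (listsum (filter (fun c => I (coord_layer c)) (coords L n)) (fun c' => H c c' * v c') = 0).
    rewrite (ls_ext _ _ (fun c' => rsum N (fun i => kap i * beta i c'))).
    2:{ intros c' Hc'. apply filter_In in Hc'. destruct Hc' as [Hc' _]. apply in_coords in Hc'.
        destruct c' as [q p j | q j]; simpl v; simpl beta.
        - destruct (Nat.eqb_spec q (S k)); destruct (Nat.eqb_spec j 0); destruct (Nat.ltb_spec p (n k));
            simpl; try (rewrite rsum_zero by (intros; ring); ring).
          subst. rewrite (hess_formula N X Y th H k c (CW (S k) p 0) (fun i => fwd sigma n th k (X i) p)); auto.
          rewrite <- rsum_mult_r. apply rsum_ext; intros. unfold kap, Mc.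
          apply Nat.ltb_lt in H0 as H0'. rewrite H0'. ring. lia.
          intros i m. unfold pcoef. rewrite Nat.eqb_refl. simpl andb. apply Nat.ltb_lt in H0. rewrite H0.
          destruct m; simpl; ring.
        - destruct (Nat.eqb_spec q (S k)); destruct (Nat.eqb_spec j 0);
            simpl; try (rewrite rsum_zero by (intros; ring); ring).
          subst. rewrite (hess_formula N X Y th H k c (Cb (S k) 0) (fun i => 1)); auto.
          rewrite <- rsum_mult_r. apply rsum_ext; intros. unfold kap. ring. lia.
          intros i m. ring. }
    rewrite ls_rsum. apply rsum_zero. intros i Hi. rewrite ls_mult_l.
    rewrite ls_filter.
    2:{ intros c' _ Hf. destruct c' as [q p j | q j]; simpl;
        destruct (Nat.eqb_spec q (S k)); simpl; auto; subst; simpl in Hf; congruence. }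
    rewrite (ls_coords_layer L n (S k)) by (try lia; intros c' Hc'; destruct c'; simpl in *;
        destruct (Nat.eqb_spec k0 (S k)); simpl; auto; lia).
    unfold blk. rewrite ls_app, ls_flat_map, !ls_map.
    replace (S k - 1)%nat with k by lia.
    rewrite ls_seq0.
    rewrite (rsum_ext _ _ (fun p => Mc th k (X i) p * u p)).
    2:{ intros p Hp. rewrite ls_map.
        rewrite (ls_seq_point 0 (n (S k)) _ 0) by (try lia; intros y Hy; simpl;
          rewrite Nat.eqb_refl; destruct (Nat.eqb_spec y 0); simpl; try lia; auto).
        simpl. rewrite Nat.eqb_refl. apply Nat.ltb_lt in Hp. rewrite Hp. reflexivity. }
    rewrite (ls_seq_point 0 (n (S k)) _ 0) by (try lia; intros y Hy; simpl;
          rewrite Nat.eqb_refl; destruct (Nat.eqb_spec y 0); simpl; try lia; auto).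
    simpl. rewrite Nat.eqb_refl. simpl.
    specialize (Hu i Hi). simpl in Hu. assert (E : Mc th k (X i) (n k) = 1) by (unfold Mc; rewrite Nat.ltb_irrefl; reflexivity). rewrite E, Rmult_1_l in Hu. rewrite Hu. ring. }
  intros p Hp.
  assert (Hlt : (p < n k)%nat \/ p = n k) by lia. destruct Hlt as [Hlt | ->].
  - specialize (Hv (CW (S k) p 0)). simpl in Hv. rewrite Nat.eqb_refl in Hv. simpl in Hv.
    apply Nat.ltb_lt in Hlt as Hlt'. rewrite Hlt' in Hv. apply Hv.
    apply filter_In. split. apply in_coords. simpl. rewrite ?Nat.sub_0_r. lia. auto.
  - specialize (Hv (Cb (S k) 0)). simpl in Hv. rewrite Nat.eqb_refl in Hv. simpl in Hv. apply Hv.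
    apply filter_In. split. apply in_coords. simpl. lia. auto.
Qed.

End Net.



Module LA.
From mathcomp Require Import all_boot all_algebra.
From mathcomp Require Import Rstruct.
Set Warnings "-notation-overridden,-ambiguous-paths".
Import GRing.Theory.
Local Open Scope ring_scope.

Lemma rsum_big n (f : nat -> R) : rsum n f = \sum_(j < n) f j.
Proof.
  elim: n => [|n IH]; first by rewrite big_ord0.
  by rewrite big_ord_recr /= IH.
Qed.

Lemma la (a b : nat) (M : nat -> nat -> R) : Peano.le a b ->
  (forall u : nat -> R, (forall i, Peano.lt i a -> rsum b (fun p => Rmult (M i p) (u p)) = (Rdefinitions.IZR BinNums.Z0)) ->
     forall p, Peano.lt p b -> u p = (Rdefinitions.IZR BinNums.Z0)) ->
  forall z : nat -> R, (forall p, Peano.lt p b -> rsum a (fun i => Rmult (z i) (M i p)) = (Rdefinitions.IZR BinNums.Z0)) ->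
  forall i, Peano.lt i a -> z i = (Rdefinitions.IZR BinNums.Z0).
Proof.
  move=> /leP Hab H1' z H2' i /ltP Hi.
  have H1 : forall u : nat -> R, (forall i, (i < a)%N -> rsum b (fun p => Rmult (M i p) (u p)) = 0%R) ->
     forall p, (p < b)%N -> u p = 0%R.
    by move=> u Hu p /ltP; apply: H1' => i0 /ltP; apply: Hu.
  have H2 : forall p, (p < b)%N -> rsum a (fun i => Rmult (z i) (M i p)) = 0%R.
    by move=> p /ltP; apply: H2'.
  pose Mx := \matrix_(i < a, p < b) M i p.
  have rfT : row_free Mx^T.
    apply: inj_row_free => v Hv. apply/rowP => j. rewrite mxE.
    pose u := fun p : nat => if @insub _ (fun q : nat => (q < b)%N) _ p is Some j0 then v 0 j0 else 0%R.
    have Hu : forall j0 : 'I_b, u j0 = v 0 j0 by move=> j0; rewrite /u valK.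
    rewrite -Hu. apply: H1 => //.
    move=> i0 Hi0. rewrite rsum_big.
    transitivity ((v *m Mx^T) 0 (Ordinal Hi0)); last by rewrite Hv mxE.
    rewrite mxE. refine (@eq_bigr R 0%R GRing.add _ _ _ _ _ _). intros k _. rewrite Hu !mxE /=. exact: GRing.mulrC.
  have rk : \rank Mx = a.
    apply/eqP; rewrite eqn_leq rank_leq_row /=.
    move: rfT; rewrite /row_free mxrank_tr => /eqP ->. done.
  have rf : row_free Mx by rewrite /row_free rk.
  pose v := \row_(i < a) z i.
  have Hv : v *m Mx = 0.
    apply/rowP => p. rewrite !mxE.
    transitivity (rsum a (fun i => Rmult (z i) (M i p))); last exact: H2.
    rewrite rsum_big. refine (@eq_bigr R 0%R GRing.add _ _ _ _ _ _). intros k _. by rewrite !mxE.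
  have : v = 0 by apply: (row_free_inj rf); rewrite Hv mul0mx.
  move/(congr1 (fun w : 'rV_a => w 0 (Ordinal Hi))). by rewrite !mxE.
Qed.

End LA.

Module AN.
From Coquelicot Require Import Coquelicot.
Open Scope R_scope.

Lemma lim0_bounded (u : nat -> R) : is_lim_seq u 0 -> exists M, forall k, Rabs (u k) <= M.
Proof.
  intros H. apply is_lim_seq_spec in H. destruct (H (mkposreal 1 Rlt_0_1)) as [N HN]. simpl in HN.
  exists (1 + sum_f_R0 (fun k => Rabs (u k)) N). intros k.
  assert (Hs : forall m, 0 <= sum_f_R0 (fun k => Rabs (u k)) m).
  { induction m; simpl. apply Rabs_pos. pose proof (Rabs_pos (u (S m))); lra. }
  destruct (Nat.le_gt_cases N k) as [Hk|Hk].
  - specialize (HN k Hk). rewrite Rminus_0_r in HN. pose proof (Hs N); lra.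
  - assert (forall m, (k <= m)%nat -> Rabs (u k) <= sum_f_R0 (fun k => Rabs (u k)) m).
    { induction m; intros Hm. assert (k = 0%nat) by lia. subst; simpl; lra.
      destruct (Nat.eq_dec k (S m)). subst. simpl. pose proof (Hs m); lra.
      simpl. pose proof (Rabs_pos (u (S m))). specialize (IHm ltac:(lia)). lra. }
    specialize (H0 N ltac:(lia)). lra.
Qed.

Lemma radius_ge (a : nat -> R) r : 0 < r ->
  (forall h, Rabs h < r -> exists v, Pser a h v) ->
  forall h, Rabs h < r -> Rbar_lt (Rabs h) (CV_radius a).
Proof.
  intros Hr Hc h Hh.
  set (rho := (Rabs h + r) / 2).
  assert (Hrho : Rabs rho < r).
  { unfold rho. pose proof (Rabs_pos h). rewrite Rabs_pos_eq; lra. }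
  destruct (Hc rho Hrho) as [v Hv]. apply is_pseries_Reals in Hv.
  assert (He : ex_series (fun k => a k * rho ^ k)).
  { apply ex_pseries_R. exists v. exact Hv. }
  apply ex_series_lim_0 in He. apply lim0_bounded in He. destruct He as [M HM].
  destruct (CV_radius_bounded a) as [Hub _].
  assert (Hle : Rbar_le rho (CV_radius a)). { apply Hub. exists M. exact HM. }
  destruct (CV_radius a) as [c| |]; simpl in *; auto.
  unfold rho in Hle. pose proof (Rabs_pos h). lra.
Qed.

Lemma ball_R (x e y : R) : ball x e y <-> Rabs (y - x) < e.
Proof. unfold ball; simpl; unfold AbsRing_ball; simpl. unfold abs, minus, plus, opp; simpl. tauto. Qed.

Lemma analytic_dex (sigma s1 : R -> R) : real_analytic sigma ->
  (forall t, derivable_pt_lim sigma t (s1 t)) ->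
  forall t, exists v, derivable_pt_lim s1 t v.
Proof.
  intros Han Hs1 x0. destruct (Han x0) as [r [Hr [a Ha]]].
  assert (Hrad : forall h, Rabs h < r -> Rbar_lt (Rabs h) (CV_radius a)).
  { apply radius_ge; auto. intros h Hh. exists (sigma (x0 + h)). replace h with (x0 + h - x0) at 1 by ring.
    apply Ha. replace (x0 + h - x0) with h by ring. exact Hh. }
  assert (Heq : forall y, Rabs (y - x0) < r -> sigma y = PSeries a (y - x0)).
  { intros y Hy. symmetry. apply is_pseries_unique. apply is_pseries_Reals. apply Ha; auto. }
  assert (Hs : forall y, Rabs (y - x0) < r -> s1 y = PSeries (PS_derive a) (y - x0)).
  { intros y Hy.
    assert (Hd : is_derive (fun z => PSeries a (z - x0)) y (PSeries (PS_derive a) (y - x0))).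
    { apply is_derive_Reals.
      assert (H1 : derivable_pt_lim (PSeries a) (y - x0) (PSeries (PS_derive a) (y - x0))).
      { apply is_derive_Reals. apply is_derive_PSeries. apply Hrad; auto. }
      assert (H2 : derivable_pt_lim (fun z => z - x0) y 1).
      { pose proof (derivable_pt_lim_minus id (fct_cte x0) y 1 0 (derivable_pt_lim_id y) (derivable_pt_lim_const x0 y)) as H.
        replace (1 - 0) with 1 in H by ring. exact H. }
      pose proof (derivable_pt_lim_comp (fun z => z - x0) (PSeries a) y 1 _ H2 H1) as H3.
      rewrite Rmult_1_r in H3. exact H3. }
    apply is_derive_Reals in Hd.
    apply (uniqueness_limite sigma y); auto.
    apply is_derive_Reals. apply is_derive_Reals in Hd.
    apply (is_derive_ext_loc (fun z => PSeries a (z - x0))); auto.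
    assert (He : 0 < r - Rabs (y - x0)) by lra.
    exists (mkposreal _ He). intros z Hz. unfold ball in Hz; simpl in Hz; unfold AbsRing_ball, abs, minus, plus, opp in Hz; simpl in Hz. change (z + - y) with (z - y) in Hz. change (z + - x0) with (z - x0) in Hz.
    symmetry; apply Heq. pose proof (Rabs_triang (z - y) (y - x0)).
    replace (z - y + (y - x0)) with (z - x0) in H by ring. simpl in Hz. lra. }
  assert (Hg : ex_derive (fun y => PSeries (PS_derive a) (y - x0)) x0).
  { apply (ex_derive_comp (PSeries (PS_derive a)) (fun y => y - x0)).
    eexists. apply is_derive_PSeries. rewrite CV_radius_derive. apply Hrad.
    replace (x0 - x0) with 0 by ring. rewrite Rabs_R0; lra.
    exists 1. apply is_derive_Reals.
    pose proof (derivable_pt_lim_minus id (fct_cte x0) x0 1 0 (derivable_pt_lim_id x0) (derivable_pt_lim_const x0 x0)) as H.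
    replace (1 - 0) with 1 in H by ring. exact H. }
  destruct Hg as [v Hv]. exists v. apply is_derive_Reals.
  apply (is_derive_ext_loc (fun y => PSeries (PS_derive a) (y - x0))); auto.
  exists (mkposreal r Hr). intros z Hz. unfold ball in Hz; simpl in Hz; unfold AbsRing_ball, abs, minus, plus, opp in Hz; simpl in Hz. change (z + - x0) with (z - x0) in Hz. symmetry; apply Hs; auto.
Qed.

End AN.

Theorem mainTheorem5
  (sigma l : R -> R) (L : nat) (n : nat -> nat) (N : nat)
  (X Y : nat -> nat -> R) (k : nat) (I : nat -> bool) (th : params)
  (Hwidth : forall q, (q <= L)%nat -> (1 <= n q)%nat)
  (Hx : forall i j, (i < N)%nat -> (j < N)%nat -> i <> j ->
          exists p, (p < n 0)%nat /\ X i p <> X j p)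
  (Hsigma : activation_ok sigma)
  (Hl : loss_ok l)
  (Hattained : exists th0, global_min (Phi sigma l L n N X Y) th0)
  (Hk : (1 <= k <= L - 1)%nat)
  (HnK : (N - 1 <= n k)%nat)
  (Hcrit : critical_point (Phi sigma l L n N X Y) L n th)
  (HI : forall q, I q = true -> (k + 1 <= q <= L)%nat)
  (HIk : I (k + 1)%nat = true)
  (Hnondeg : nondegenerate_on_layers (Phi sigma l L n N X Y) L n I th)
  (Hrank : forall q, (k + 2 <= q <= L)%nat -> full_column_rank n th q) :
  global_min (Phi sigma l L n N X Y) th.
Proof.
  destruct Hsigma as [Han [Hder _]].
  destruct Hl as [l1 [l2 [Hl1 [Hl2 [_ Hmin]]]]].
  set (s1 := fun t => dv sigma t).
  assert (Hs1 : forall t, derivable_pt_lim sigma t (s1 t)).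
  { intros t. apply dv_spec. destruct (Hder t) as [d [Hd _]]. exists d; exact Hd. }
  assert (Hpos : forall t, 0 < s1 t).
  { intros t. destruct (Hder t) as [d [Hd Hd0]].
    rewrite (uniqueness_limite sigma t (s1 t) d (Hs1 t) Hd). exact Hd0. }
  assert (Hs2 : forall t, dex s1 t).
  { intros t. exact (AN.analytic_dex sigma s1 Han Hs1 t). }
  assert (Hl2' : forall t, dex l1 t) by (intros t; exists (l2 t); auto).
  rewrite Nat.add_1_r in HIk.
  assert (HkL : (S k <= L)%nat) by lia.
  assert (Hker := kernel_triv sigma l s1 l1 n L Hs1 Hl1 Hs2 Hl2' N X Y th k I Hnondeg HkL HIk
     ltac:(intros q Hq; specialize (HI q Hq); lia) ltac:(apply Hwidth; lia)).
  assert (Hdelta : forall j, (j < n (S k))%nat -> forall i, (i < N)%nat ->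
     Dl sigma s1 l1 n th (Y i) (L - S k) (S k) (preS sigma n th k (X i)) j = 0).
  { intros j Hj.
    apply (LA.la N (S (n k)) (fun i p => Mc sigma n th k (X i) p)). lia. exact Hker.
    intros p Hp.
    set (c := if Nat.ltb p (n k) then CW (S k) p j else Cb (S k) j).
    assert (Hvc : valid L n c).
    { unfold c. destruct (Nat.ltb_spec p (n k)); simpl; rewrite ?Nat.sub_0_r; lia. }
    assert (Hd := Hcrit c Hvc).
    assert (Hd2 : derivable_pt_lim (fun t => Phi sigma l L n N X Y (perturb th c t)) 0
        (rsum N (fun i => Ec sigma s1 l1 n L th (X i) (Y i) c))).
    { apply (dl_rsum N (fun i t => Fi sigma l n L (perturb th c t) (X i) (Y i))).
      intros i Hi. apply dFi; auto. unfold c; destruct (Nat.ltb p (n k)); simpl; lia. }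
    rewrite (uniqueness_limite _ _ _ _ Hd Hd2).
    apply rsum_ext. intros i Hi. unfold c, Mc.
    destruct (Nat.ltb_spec p (n k)).
    - rewrite Ec_CW by auto. ring.
    - rewrite Ec_Cb by auto. ring. }
  assert (Hzero : forall i, (i < N)%nat -> forall m, (m < n L)%nat ->
     l1 (fwd sigma n th L (X i) m - Y i m) = 0).
  { intros i Hi. apply (back sigma s1 l1 n L th Hpos (L - S k) k (X i) (Y i)). lia.
    intros q Hq; apply Hrank; lia.
    intros r Hr; apply Hdelta; auto. }
  intros th'. unfold Phi. apply rsum_le. intros i Hi. apply rsum_le. intros m Hm.
  apply Hmin. apply Hzero; auto.
Qed.
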